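(* Let $\mathcal{H}$ be a Hilbert space, $h\in\mathcal{H}$, and $\mathcal{L}$ a nonempty set of closed subspaces of $\mathcal{H}$. Define $\mathcal{C}: 2^{\mathcal{L}}\to 2^{\mathcal{L}}$ by: for $A\subseteq\mathcal{L}$ and $b\in\mathcal{L}$, $b\in\mathcal{C}(A)$ iff $A^*_p(h)\in b$. Then $\mathcal{C}$ is an L-logics, i.e. it satisfies Inclusion ($A\subseteq\mathcal{C}(A)$ for all $A\subseteq\mathcal{L}$) and Loop: for every $n\ge 1$ and all $A_0,\dots,A_{n-1}\subseteq\mathcal{L}$, if $A_i\subseteq\mathcal{C}(A_{i+1})$ for every $i=0,\dots,n-1$ (indices modulo $n$), then $\mathcal{C}(A_0)=\mathcal{C}(A_1)$.
   Context: For $A\subseteq\mathcal{L}$, $A^* = \bigcap_{a\in A} a$ (a closed subspace of $\mathcal{H}$; $A^*=\mathcal{H}$ when $A=\emptyset$), and $A^*_p$ denotes the orthogonal projection onto $A^*$, so $A^*_p(h)$ is the element of $A^*$ closest to $h$. *)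

(* Defs.v *)
From HB Require Import structures.
From mathcomp Require Import all_boot all_order all_algebra.
From mathcomp Require Import all_classical all_reals topology normedtype.
Set Implicit Arguments. Unset Strict Implicit. Unset Printing Implicit Defensive.
Import Order.TTheory GRing.Theory Num.Theory.
Import numFieldNormedType.Exports.
Local Open Scope classical_set_scope.
Local Open Scope ring_scope.

Definition hilbert_norm (R : realType) (V : completeNormedModType R) : Prop :=
  exists ip : V -> V -> R,
    [/\ (forall x y, ip x y = ip y x),
        (forall (a : R) (x y z : V), ip (a *: x + y) z = a * ip x z + ip y z)
      & (forall x, ip x x = `|x| ^+ 2)].

Definition closed_subspace (R : realType) (V : completeNormedModType R)
  (a : set V) : Prop :=
  [/\ closed a, a 0,
      (forall x y, a x -> a y -> a (x + y))
    & (forall (k : R) x, a x -> a (k *: x))].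

(* A^* = intersection of the members of A (= whole space if A is empty) *)
Definition Astar (V : Type) (A : set (set V)) : set V :=
  \bigcap_(a in A) a.

(* orthogonal projection onto S: the element of S closest to h *)
Definition proj (R : realType) (V : completeNormedModType R)
  (S : set V) (h : V) : V :=
  xget 0 [set p | S p /\ forall q, S q -> `|h - p| <= `|h - q|].

Definition Cop (R : realType) (V : completeNormedModType R)
  (L : set (set V)) (h : V) (A : set (set V)) : set (set V) :=
  [set b | L b /\ b (proj (Astar A) h)].

(* Main.v *)
Require Import Defs.
From HB Require Import structures.
From mathcomp Require Import all_boot all_order all_algebra.
From mathcomp Require Import all_classical all_reals topology normedtype.
From mathcomp Require Import ring lra.
Import Order.TTheory GRing.Theory Num.Theory.
Import numFieldNormedType.Exports.
Local Open Scope classical_set_scope.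
Local Open Scope ring_scope.

Section Aux.
Variables (R : realType) (V : completeNormedModType R).

Lemma para (HV : hilbert_norm V) (x y : V) :
  `|x + y| ^+ 2 + `|x - y| ^+ 2 = 2 * `|x| ^+ 2 + 2 * `|y| ^+ 2.
Proof.
case: HV => ip [Hs Hl Hn].
have ip0 z : ip 0 z = 0.
  have := Hl 1 0 0 z; rewrite scale1r addr0 mul1r => H; lra.
have ipD a b z : ip (a + b) z = ip a z + ip b z.
  by rewrite -[a]scale1r Hl mul1r scale1r.
have ipN a z : ip (- a) z = - ip a z.
  by rewrite -[- a]addr0 -scaleN1r Hl ip0 addr0 mulN1r.
have ipDr a b z : ip z (a + b) = ip z a + ip z b.
  by rewrite Hs ipD (Hs a) (Hs b).
have ipNr a z : ip z (- a) = - ip z a.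
  by rewrite Hs ipN Hs.
rewrite -!Hn !ipD !ipDr !ipN !ipNr (Hs y x).
ring.
Qed.

Lemma Astar_cs (L : set (set V)) (A : set (set V)) :
  (forall a, L a -> closed_subspace a) -> A `<=` L -> closed_subspace (Astar A).
Proof.
move=> hL AL; split.
- apply: closed_bigI => a /AL /hL [].  done.
- by move=> a /AL /hL [].
- move=> x y Hx Hy a Aa; have [_ _ + _] := hL a (AL a Aa); apply; [exact: Hx|exact: Hy].
- move=> k x Hx a Aa; have [_ _ _] := hL a (AL a Aa); apply; exact: Hx.
Qed.

Definition minimizer (S : set V) (h p : V) :=
  S p /\ forall q, S q -> `|h - p| <= `|h - q|.

Lemma proj_spec (S : set V) h :
  (exists p, minimizer S h p) -> minimizer S h (Defs.proj S h).
Proof.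
move=> [p Hp]; rewrite /Defs.proj; case: xgetP => //.
by move=> /(_ p).
Qed.

Lemma mid_bound (HV : hilbert_norm V) (S : set V) (h : V) (d : R) :
  closed_subspace S -> 0 <= d -> (forall m, S m -> d <= `|h - m|) ->
  forall x y, S x -> S y ->
  `|x - y| ^+ 2 <= 2 * `|h - x| ^+ 2 + 2 * `|h - y| ^+ 2 - 4 * d ^+ 2.
Proof.
move=> [_ S0 SD SZ] d0 Hd x y Sx Sy.
have := para HV (h - x) (h - y).
set m := 2^-1 *: (x + y).
have Sm : S m by apply: SZ; apply: SD.
have E : h - x + (h - y) = 2 *: (h - m).
  rewrite /m scalerBr scalerA mulfV ?scale1r ?pnatr_eq0 // scaler_nat mulr2n.
  by rewrite opprD addrACA.
have E2 : h - x - (h - y) = y - x.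
  by rewrite opprB addrC addrA subrK.
rewrite E E2 normrZ ger0_norm // (distrC y x) => H.
have := Hd m Sm => Hm.
have : d ^+ 2 <= `|h - m| ^+ 2.
  by rewrite !expr2; apply: ler_pM.
move: H.
rewrite exprMn => H Ha.
have e4 : (2:R) ^+ 2 = 4 by rewrite expr2 -natrM.
rewrite e4 in H.
lra.
Qed.


Lemma small (c t : R) : 0 < t ->
  exists N, forall n, (N <= n)%N -> c * n.+1%:R^-1 < t.
Proof.
move=> t0; exists (Num.truncn (c / t)) => n Hn.
have h1 := truncnS_gt (c / t); rewrite ltr_pdivrMr // in h1.
have h2 : ((Num.truncn (c / t)).+1%:R : R) <= n.+1%:R by rewrite ler_nat.
rewrite ltr_pdivrMr ?ltr0Sn //.
nra.
Qed.

Lemma inv_mono (n m : nat) : (n <= m)%N -> m.+1%:R^-1 <= n.+1%:R^-1 :> R.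
Proof. by move=> H; rewrite lef_pV2 ?posrE ?ltr0Sn // ler_nat. Qed.

Lemma inv_pos (n : nat) : 0 < n.+1%:R^-1 :> R.
Proof. by rewrite invr_gt0 ltr0Sn. Qed.

Lemma inv_le1 (n : nat) : n.+1%:R^-1 <= 1 :> R.
Proof. by rewrite invf_le1 ?ltr0Sn // ler1n. Qed.

Lemma exists_min (HV : hilbert_norm V) (S : set V) (h : V) :
  closed_subspace S -> exists p, minimizer S h p.
Proof.
move=> cs; have [Scl S0 SD SZ] := cs.
set E := [set `|h - q| | q in S].
have En : E !=set0 by exists `|h - 0|; exists 0.
have Elb : has_lbound E by exists 0 => _ [q _ <-]; exact: normr_ge0.
have Einf : has_inf E by split.
set d := inf E.
have Hd q : S q -> d <= `|h - q| by move=> Sq; apply: ge_inf => //; exists q.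
have d0 : 0 <= d by apply: lb_le_inf => // _ [q _ <-].
have Hq n : exists q, S q /\ `|h - q| < d + n.+1%:R^-1.
  have [_ [q Sq <-] Hlt] := inf_adherent (inv_pos n) Einf.
  by exists q.
have [q Hq'] := choice Hq.
set c := 2 * d + 1.
have Ha n : `|h - q n| ^+ 2 - d ^+ 2 <= c * n.+1%:R^-1.
  have [_ Hn] := Hq' n; have e0 := inv_pos n; have e1 := inv_le1 n.
  have t0 := normr_ge0 (h - q n).
  set t := `|h - q n| in Hn t0 *; set u := n.+1%:R^-1 in e0 e1 Hn *.
  have p1 : 0 <= t * (d + u - t) by apply: mulr_ge0; lra.
  have p2 : 0 <= (d + u) * (d + u - t) by apply: mulr_ge0; lra.
  have p3 : 0 <= u * (1 - u) by apply: mulr_ge0; lra.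
  rewrite /c; nra.
have c0 : 0 <= c by rewrite /c; lra.
clearbody c.
have Hqq n m : `|q n - q m| ^+ 2 <= 2 * (c * n.+1%:R^-1) + 2 * (c * m.+1%:R^-1).
  have := @mid_bound HV S h d cs d0 Hd (q n) (q m) (Hq' n).1 (Hq' m).1.
  have := Ha n; have := Ha m. move: (c / n.+1%:R) (c / m.+1%:R) => a b; lra.
have cvq : cvg (q @ \oo).
  apply: cauchy_cvg; apply: cauchy_exP => eps eps0.
  have [N HN] := @small (4 * c) (eps ^+ 2) (exprn_gt0 2 eps0).
  exists (q N); exists N => // n /= HNn.
  rewrite -ball_normE /=.
  have A : c / n.+1%:R <= c / N.+1%:R by apply: ler_wpM2l => //; exact: inv_mono.
  have B := HN N (leqnn N); have C := Hqq N n.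
  have D : `|q N - q n| ^+ 2 < eps ^+ 2.
    rewrite -mulrA in B; move: A B C.
    move: (c / n.+1%:R) (c / N.+1%:R) => a b; lra.
  have := normr_ge0 (q N - q n).
  move: D; rewrite !expr2; nra.
have [p qp] := (cvg_ex _).1 cvq.
have Sp : S p.
  apply: (closed_cvg _ Scl _ _ qp); apply: nearW => n; exact: (Hq' n).1.
exists p; split => // q0 Sq0; apply: le_trans (Hd _ Sq0).
apply/ler_addgt0Pr => e e0.
have e2 : 0 < e / 2 by lra.
have [N0 _ HN0] := cvgr_dist_lt _ _ qp _ e2.
have [N1 HN1] := @small 1 (e / 2) e2.
set N := maxn N0 N1.
have HN := HN0 N (leq_maxl _ _).
have HN' := HN1 N (leq_maxr _ _).
have [_ HqN] := Hq' N.
have := ler_distD (q N) h p; rewrite (distrC (q N) p).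
move: HN HN' HqN; rewrite mul1r /=. move: (N.+1%:R^-1) => u; lra.
Qed.


Lemma min_uniq (HV : hilbert_norm V) (S : set V) (h x y : V) :
  closed_subspace S -> minimizer S h x -> S y -> `|h - y| <= `|h - x| -> y = x.
Proof.
move=> cs [Sx Hx] Sy Hle.
have H := @mid_bound HV S h `|h - x| cs (normr_ge0 _) Hx x y Sx Sy.
have H2 : `|h - y| ^+ 2 <= `|h - x| ^+ 2.
  by rewrite !expr2; apply: ler_pM.
have H3 : `|x - y| = 0.
  have := normr_ge0 (x - y); move: H H2; rewrite !expr2 => H H2 H0; nra.
by apply/eqP; rewrite eq_sym -subr_eq0 -normr_eq0 H3.
Qed.

End Aux.
Arguments minimizer {R V}.

Theorem theorem9 (R : realType) (V : completeNormedModType R)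
  (HV : hilbert_norm V) (h : V) (L : set (set V))
  (hL0 : L !=set0) (hL : forall a, L a -> closed_subspace a) :
  (forall A, A `<=` L -> A `<=` Cop L h A) /\
  (forall (n : nat) (As : nat -> set (set V)), (0 < n)%N ->
     (forall i, (i < n)%N -> As i `<=` L) ->
     (forall i, (i < n)%N -> As i `<=` Cop L h (As (i.+1 %% n)%N)) ->
     Cop L h (As 0%N) = Cop L h (As (1 %% n)%N)).
Proof.
have PM A : A `<=` L -> minimizer (Astar A) h (Defs.proj (Astar A) h).
  move=> AL; apply: proj_spec; apply: (@exists_min R V HV (Astar A) h); exact: (@Astar_cs R V L A hL AL).
split.
  move=> A AL b Ab; split; first exact: AL.
  by have [+ _] := PM A AL; apply.
move=> n As n0 AsL Hc.
case: n n0 AsL Hc => [//|[|n]] _ AsL Hc.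
  by rewrite modnn.
rewrite (modn_small (isT : (1 < n.+2)%N)).
set p := fun i => Defs.proj (Astar (As i)) h.
have Mi i : (i < n.+2)%N -> minimizer (Astar (As i)) h (p i).
  by move=> Hi; apply: PM; apply: AsL.
have Step i : (i < n.+2)%N -> Astar (As i) (p (i.+1 %% n.+2)%N).
  by move=> Hi b Ab; have [_] := Hc i Hi b Ab.
have Le i : (i < n.+2)%N -> `|h - p i| <= `|h - p (i.+1 %% n.+2)%N|.
  by move=> Hi; have [_ +] := Mi i Hi; apply; apply: Step.
have Ch k : (0 < k)%N -> (k < n.+2)%N -> `|h - p 1%N| <= `|h - p k|.
  elim: k => [//|[|k] IH] _ Hk; first by [].
  apply: le_trans (IH isT (ltnW Hk)) _.
  by have := Le k.+1 (ltnW Hk); rewrite modn_small.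
have L1 : `|h - p 1%N| <= `|h - p 0%N|.
  apply: le_trans (Ch n.+1 isT (ltnSn _)) _.
  by have := Le n.+1 (ltnSn _); rewrite modnn.
have E : p 1%N = p 0%N.
  apply: (@min_uniq R V HV (Astar (As 0%N)) h).
  - exact: (@Astar_cs R V L _ hL (AsL 0%N isT)).
  - exact: Mi.
  - exact: (Step 0%N isT).
  - exact: L1.
by rewrite /Cop -/(p 0%N) -/(p 1%N) E.
Qed.
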